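(* Let $G$ be a finite loopless graph (parallel edges allowed). There exist a maximal spanning forest $F$ of $G$ and an orientation $\mathcal{O}_1$ of $G$ such that, with the basis $B_{\mathcal{C}}$ built from $(F,\mathcal{O}_1)$, $\langle x_i,e_j\rangle\in\{0,1\}$ for all $x_i\in B_{\mathcal{C}}$ and $e_j\in E(G)$; and an orientation $\mathcal{O}_2$ such that, with the basis $B_{\mathcal{F}}$ built from $(F,\mathcal{O}_2)$, $\langle x_i,e_j\rangle\in\{0,1\}$ for all $x_i\in B_{\mathcal{F}}$ and $e_j\in E(G)$.
   Context: For an orientation $\mathcal{O}$, $C_1(G;\mathbb{Z})$ is the free abelian group on $E=\{e_1,\dots,e_n\}$, each $e_j$ taken with its $\mathcal{O}$-direction, $E$ orthonormal. Given a maximal spanning forest $F$: for $e_i\in E(F)$, $F\setminus e_i$ has components $K_1,K_2$ with $e_i$ directed from $K_1$ to $K_2$, and $x_i=\sum_j\epsilon_je_j$ over the edges $e_j$ between $K_1$ and $K_2$, $\epsilon_j=+1$ if $e_j$ is directed out of $K_1$ in $\mathcal{O}$, else $-1$; $B_{\mathcal{C}}=\{x_i:e_i\in E(F)\}$. For $e_i\notin E(F)$, $x_i=\sum_j\epsilon_je_j$ over the unique cycle in $F\cup e_i$, oriented cyclically so that $e_i$ keeps its $\mathcal{O}$-direction, $\epsilon_j=\pm1$ according as the cyclic and $\mathcal{O}$ directions agree or differ; $B_{\mathcal{F}}=\{x_i:e_i\notin E(F)\}$. *)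

(* Defs.v *)
From mathcomp Require Import all_boot all_order all_algebra.
Set Implicit Arguments. Unset Strict Implicit. Unset Printing Implicit Defensive.
Import GRing.Theory Num.Theory.

(* A finite multigraph: finite vertex type V, finite edge type E, and each
   edge e has (unordered) endpoints u e and v e. *)
Section Graph.
Variables (V E : finType) (u v : E -> V).

Definition tailO (O : E -> bool) (e : E) : V := if O e then u e else v e.
Definition headO (O : E -> bool) (e : E) : V := if O e then v e else u e.

Definition joins (e : E) (x y : V) : bool :=
  ((u e == x) && (v e == y)) || ((u e == y) && (v e == x)).

Definition adj (S : {set E}) : rel V := fun x y => [exists e in S, joins e x y].
Definition conn (S : {set E}) (x y : V) : bool := connect (adj S) x y.

Definition forest (S : {set E}) : Prop :=
  forall e, e \in S -> ~~ conn (S :\ e) (u e) (v e).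

Definition max_spanning_forest (F : {set E}) : Prop :=
  forest F /\ forall e, e \notin F -> ~ forest (e |: F).

(* Fundamental cut vector x_i for e_i in F, w.r.t. orientation O:
   K1 = component of F\e_i containing the tail of e_i, K2 = the one
   containing its head; coefficient <x_i, e_j>. *)
Definition cut_coef (F : {set E}) (O : E -> bool) (i j : E) : int :=
  let S := F :\ i in
  let K1 := conn S (tailO O i) in
  let K2 := conn S (headO O i) in
  if K1 (tailO O j) && K2 (headO O j) then 1%R
  else if K2 (tailO O j) && K1 (headO O j) then (-1)%R
  else 0%R.

(* p = [:: p_0; ...; p_(n-1)] with vertex sequence vs = [:: x_0; ...; x_n]
   is a path in F from a to b: edges in F, vertices distinct, p_k joins
   x_k and x_(k+1). *)
Definition steps (p : seq E) (vs : seq V) : seq (E * (V * V)) :=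
  zip p (zip vs (behead vs)).

Definition forest_path (F : {set E}) (a b : V) (p : seq E) (vs : seq V) : bool :=
  [&& all (fun e => e \in F) p, uniq vs, size vs == (size p).+1,
      head a vs == a, last a vs == b &
      all (fun t => joins t.1 t.2.1 t.2.2) (steps p vs)].

(* Coefficient of e_j in the cycle formed by e_i (kept with its O-direction,
   from tailO to headO) followed by the path p from headO O i back to
   tailO O i: +1 if e_j is traversed in its O-direction, -1 otherwise. *)
Definition cyc_coef (O : E -> bool) (i : E) (p : seq E) (vs : seq V) (j : E)
  : int :=
  ((j == i)%:R +
   \sum_(t <- steps p vs | t.1 == j)
      (if (tailO O j == t.2.1) && (headO O j == t.2.2) then 1 else -1))%R.

End Graph.

(* Main.v *)
Require Import Defs.
From mathcomp Require Import all_boot all_order all_algebra.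
From mathcomp Require Import zify.
Set Implicit Arguments. Unset Strict Implicit. Unset Printing Implicit Defensive.
Import GRing.Theory Num.Theory.

Definition up (V E : finType) (par : V -> option E) (pv : V -> V) : rel V :=
  fun z w => (par z != None) && (pv z == w).
Definition anc (V E : finType) (par : V -> option E) (pv : V -> V) (y x : V) :=
  connect (up par pv) x y.

Section Generic.
Variables (V E : finType) (u v : E -> V).

Lemma joins_cases e a b a' b' : joins u v e a b -> joins u v e a' b' ->
  (a = a' /\ b = b') \/ (a = b' /\ b = a').
Proof.
rewrite /joins => /orP[/andP[/eqP<- /eqP<-]|/andP[/eqP<- /eqP<-]]
  /orP[/andP[/eqP<- /eqP<-]|/andP[/eqP<- /eqP<-]]; auto.
Qed.

Lemma joins_sym e a b : joins u v e a b = joins u v e b a.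
Proof. by rewrite /joins orbC. Qed.

Lemma joins_uv e : joins u v e (u e) (v e).
Proof. by rewrite /joins !eqxx. Qed.

Lemma adj_sym S : symmetric (adj u v S).
Proof.
move=> x y; rewrite /adj; apply/existsP/existsP => -[e /andP[eS J]];
  exists e; by rewrite eS joins_sym.
Qed.

Lemma conn_sym S x y : conn u v S x y = conn u v S y x.
Proof. exact: (sym_connect_sym (adj_sym S)). Qed.

Variables (par : V -> option E) (pv : V -> V).

Lemma anc_trans a b c : anc par pv a b -> anc par pv b c -> anc par pv a c.
Proof. by move=> H1 H2; apply: connect_trans H2 H1. Qed.

Lemma anc_par z e : par z = Some e -> anc par pv (pv z) z.
Proof. by move=> Ez; apply: connect1; rewrite /up Ez eqxx. Qed.

Lemma anc_inv c z : anc par pv c z -> z != c -> anc par pv c (pv z).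
Proof.
move/connectP=> [[|w p]] /=; first by move=> _ ->; rewrite eqxx.
case/andP=> /andP[_ /eqP <-] pth Hl _; apply/connectP; by exists p.
Qed.

Lemma anc_root y z : par z = None -> anc par pv y z -> z = y.
Proof.
move=> Ez /connectP[[|w p]] /=; first by move=> _ ->.
by rewrite /up Ez.
Qed.

Variable h : V -> nat.
Hypothesis Hh : forall z e, par z = Some e -> h (pv z) < h z.

Lemma anc_le x y : anc par pv y x -> h y <= h x.
Proof.
move/connectP=> [p]; elim: p x => [|w p IH] x /=; first by move=> _ ->.
rewrite /up; case Ex: (par x) => [e|] //= /andP[/eqP Hw pth] Hl.
subst w; have := IH _ pth Hl; have := Hh Ex; lia.
Qed.

Lemma anc_lt x y : anc par pv y x -> x != y -> h y < h x.
Proof.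
move=> H nxy; have := anc_le (anc_inv H nxy).
move: H => /connectP[[|w p]] /=; first by move=> _ Ey; rewrite Ey eqxx in nxy.
rewrite /up; case Ex: (par x) => [e|] //= _ _; have := Hh Ex; lia.
Qed.

Lemma par_inj z z' e : (forall z e, par z = Some e -> joins u v e z (pv z)) ->
  par z = Some e -> par z' = Some e -> z = z'.
Proof.
move=> Hj Ez Ez'; case: (joins_cases (Hj _ _ Ez) (Hj _ _ Ez')) => [[]|[E1 E2]] //.
have := Hh Ez; have := Hh Ez'; rewrite -E1 E2; lia.
Qed.

End Generic.

Section Main.
Variables (V E : finType) (u v : E -> V).
Hypothesis loopless : forall e, u e != v e.
Variables (par : V -> option E) (pv : V -> V) (h : V -> nat).
Hypothesis Hj : forall z e, par z = Some e -> joins u v e z (pv z).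
Hypothesis Hh : forall z e, par z = Some e -> h (pv z) < h z.
Hypothesis Hc : forall e, anc par pv (u e) (v e) || anc par pv (v e) (u e).

Definition F : {set E} := [set e | [exists z, par z == Some e]].

Lemma inF e : e \in F -> exists z, par z = Some e.
Proof. by rewrite inE => /existsP[z /eqP]; eauto. Qed.

Lemma parF z e : par z = Some e -> e \in F.
Proof. by move=> Ez; rewrite inE; apply/existsP; exists z; rewrite Ez. Qed.

Lemma anc_not_pv c e : par c = Some e -> ~~ anc par pv c (pv c).
Proof. move=> Ec; apply/negP => /(anc_le Hh); have := Hh Ec; lia. Qed.

Lemma closure c e : par c = Some e -> forall x y,
  conn u v (F :\ e) x y -> anc par pv c x -> anc par pv c y.
Proof.
move=> Ec x y /connectP[p]; elim: p x => [|w p IH] x /=; first by move=> _ ->.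
case/andP=> /existsP[f /andP[fS J]] pth Hl Hx; apply: (IH w pth Hl).
move: fS; rewrite !inE => /andP[fe /existsP[z /eqP Ez]].
case: (joins_cases J (Hj Ez)) => [[Ex Ew]|[Ex Ew]]; subst x w.
- apply: anc_inv Hx _; apply/eqP => zc; subst z.
  by rewrite Ec in Ez; case: Ez => fe'; rewrite fe' eqxx in fe.
- exact: anc_trans Hx (anc_par _ Ez).
Qed.

Lemma F_forest : forest u v F.
Proof.
move=> e /inF[c Ec]; have J := Hj Ec; apply/negP => Hcon.
have Hn := anc_not_pv Ec.
case: (joins_cases (joins_uv u v e) J) => [[E1 E2]|[E1 E2]]; rewrite E1 E2 in Hcon.
- by rewrite (closure Ec Hcon (connect0 _ _)) in Hn.
- by rewrite conn_sym in Hcon; rewrite (closure Ec Hcon (connect0 _ _)) in Hn.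
Qed.

Lemma anc_conn x y : anc par pv y x -> conn u v F x y.
Proof.
apply: connect_sub => a b; rewrite /up; case Ea: (par a) => [e|] //= /eqP <-.
apply: connect1; apply/existsP; exists e; by rewrite (parF Ea) (Hj Ea).
Qed.

Lemma F_max : max_spanning_forest u v F.
Proof.
split; first exact: F_forest.
move=> e eF Hf; have := Hf e (setU11 e F); rewrite setU1K //; move/negP; apply.
by case/orP: (Hc e) => /anc_conn //; rewrite conn_sym.
Qed.

Definition O1 (e : E) := h (u e) < h (v e).

Lemma tail_anc j : anc par pv (tailO u v O1 j) (headO u v O1 j).
Proof.
rewrite /tailO /headO /O1; case: ltnP => H.
- by case/orP: (Hc j) => // /(anc_le Hh); lia.
- case/orP: (Hc j) => // Ha; have := anc_lt Hh Ha; rewrite eq_sym loopless.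
  move=> /(_ isT); lia.
Qed.

Lemma joins_th O j : joins u v j (tailO u v O j) (headO u v O j).
Proof. by rewrite /tailO /headO /joins; case: (O j); rewrite !eqxx ?orbT. Qed.

Lemma tree_tail c i : par c = Some i -> tailO u v O1 i = pv c /\ headO u v O1 i = c.
Proof.
move=> Ec; case: (joins_cases (joins_th O1 i) (Hj Ec)) => [[E1 E2]|[E1 E2]] //.
by have := tail_anc i; rewrite E1 E2 (negbTE (anc_not_pv Ec)).
Qed.

Lemma cut_ok i j : i \in F ->
  (cut_coef u v F O1 i j == 0%R) || (cut_coef u v F O1 i j == 1%R).
Proof.
case/inF => c Ec; case: (tree_tail Ec) => Et Eh; rewrite /cut_coef Et Eh.
have -> : conn u v (F :\ i) c (tailO u v O1 j) &&
          conn u v (F :\ i) (pv c) (headO u v O1 j) = false.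
  apply/negP => /andP[H1 H2].
  have A1 := closure Ec H1 (connect0 _ _).
  have A2 := anc_trans A1 (tail_anc j).
  rewrite conn_sym in H2; have := closure Ec H2 A2.
  by rewrite (negbTE (anc_not_pv Ec)).
by case: ifP.
Qed.

Definition O2 (e : E) := if e \in F then ~~ O1 e else O1 e.

Lemma O2_nF e : e \notin F -> tailO u v O2 e = tailO u v O1 e /\ headO u v O2 e = headO u v O1 e.
Proof. by move=> eF; rewrite /tailO /headO /O2 (negbTE eF). Qed.

Lemma O2_F c i : par c = Some i -> tailO u v O2 i = c /\ headO u v O2 i = pv c.
Proof.
move=> Ec; case: (tree_tail Ec); rewrite /tailO /headO /O2 (parF Ec).
by case: (O1 i) => /= -> ->.
Qed.

Lemma stay z fz : par z = Some fz -> forall p w ws,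
  all (fun e => e \in F) p -> size ws = size p ->
  all (fun t => joins u v t.1 t.2.1 t.2.2) (steps p (w :: ws)) ->
  pv z \notin w :: ws -> anc par pv z w -> anc par pv z (last w ws).
Proof.
move=> Ez; elim=> [|g p IH] w [|w' ws] //= /andP[gF pF] [Hs].
rewrite /steps /= => /andP[J Js] Hnin Hw.
apply: (IH w' ws pF Hs Js); first by move: Hnin; rewrite !inE negb_or => /andP[].
case/inF: gF => z' Ez'.
case: (joins_cases J (Hj Ez')) => [[E1 E2]|[E1 E2]]; subst w w'.
- apply: anc_inv Hw _; apply/eqP => zz; subst z'.
  by move: Hnin; rewrite !inE eqxx !orbT.
- exact: anc_trans Hw (anc_par _ Ez').
Qed.

Lemma up_path p x vs :
  all (fun e => e \in F) p -> uniq (x :: vs) -> size vs = size p ->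
  all (fun t => joins u v t.1 t.2.1 t.2.2) (steps p (x :: vs)) ->
  anc par pv (last x vs) x ->
  all (fun t => (par t.2.1 == Some t.1) && (t.2.2 == pv t.2.1)) (steps p (x :: vs)).
Proof.
elim: p x vs => [|f p IH] x [|y vs] //= /andP[fF pF] /andP[xnin Hu] [Hs].
rewrite /steps /= => /andP[J Js] Ha.
case/inF: (fF) => z Ez.
case: (joins_cases J (Hj Ez)) => [[E1 E2]|[E1 E2]]; subst x y.
- rewrite Ez !eqxx /=; apply: (IH _ _ pF Hu Hs Js).
  apply: anc_inv Ha _; apply/eqP => El.
  by move: xnin; rewrite {1}El mem_last.
- have := stay Ez pF Hs Js xnin (connect0 _ _).
  move=> A; have := anc_trans A Ha; by rewrite (negbTE (anc_not_pv Ez)).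
Qed.

Lemma mem_steps (p : seq E) (x : V) (vs : seq V) (t : E * (V * V)) : t \in steps p (x :: vs) -> t.2.1 \in x :: vs.
Proof.
elim: p x vs => [|f p IH] x [|y vs] //=; rewrite /steps /= inE.
case/orP => [/eqP -> | tin]; first by rewrite inE eqxx.
by rewrite inE (IH _ _ tin) orbT.
Qed.

Lemma count_steps p x vs j : uniq (x :: vs) ->
  all (fun t => par t.2.1 == Some t.1) (steps p (x :: vs)) ->
  count (fun t => t.1 == j) (steps p (x :: vs)) <= 1.
Proof.
elim: p x vs => [|f p IH] x [|y vs] //=; rewrite /steps /= => /andP[xnin Hu]
  /andP[/eqP Ex Hall].
have IH' := IH _ _ Hu Hall.
case: eqP => [fj|] //=; subst j.
suff -> : count (fun t => t.1 == f) (zip p (zip (y :: vs) vs)) = 0 by [].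
apply/eqP; rewrite -leqn0 leqNgt -has_count; apply/hasPn => t tin.
apply/negP => /eqP tf.
have := allP Hall t tin; rewrite tf => /eqP Et.
have := mem_steps tin; by rewrite (par_inj Hh Hj Et Ex) (negbTE xnin).
Qed.

Lemma sum_ones (T : Type) (s : seq T) (P : pred T) :
  (\sum_(t <- s | P t) (1 : int))%R = ((count P s)%:R)%R.
Proof.
by rewrite -(sum1_count s P) natr_sum.
Qed.

Lemma cyc_ok i p vs j : i \notin F ->
  forest_path u v F (headO u v O2 i) (tailO u v O2 i) p vs ->
  (cyc_coef u v O2 i p vs j == 0%R) || (cyc_coef u v O2 i p vs j == 1%R).
Proof.
move=> iF; case: (O2_nF iF) => -> ->.
case/and5P => pF Hu Hs Hhd /andP[Hl Hst].
case: vs Hu Hs Hhd Hl Hst => [|x vs] //= Hu /eqP [Hs] /eqP Hx /eqP Hl Hst.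
subst x.
have Hup := up_path pF Hu Hs Hst (etrans (congr1 (fun w => anc par pv w _) Hl) (tail_anc i)).
have Hall : all (fun t => par t.2.1 == Some t.1) (steps p (headO u v O1 i :: vs)).
  by apply/allP => t tin; case/andP: (allP Hup t tin).
rewrite /cyc_coef big_seq_cond.
rewrite (eq_bigr (fun _ => 1%R)); last first.
  move=> t /andP[tin /eqP <-].
  case/andP: (allP Hup t tin) => /eqP Ep /eqP Eq.
  by case: (O2_F Ep) => -> ->; rewrite Eq !eqxx.
rewrite -big_seq_cond sum_ones -natrD.
suff : (j == i) + count (fun t => t.1 == j) (steps p (headO u v O1 i :: vs)) <= 1.
  by case: (_ + _) => [|[|]].
have := count_steps j Hu Hall.
case: eqP => [ji|] //=; subst j.
suff -> : count (fun t => t.1 == i) (steps p (headO u v O1 i :: vs)) = 0 by [].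
apply/eqP; rewrite -leqn0 leqNgt -has_count; apply/hasPn => t tin.
apply/negP => /eqP ti.
have := allP Hall t tin; rewrite ti => /eqP Et.
by rewrite (parF Et) in iF.
Qed.

Lemma main_sec : exists F : {set E}, max_spanning_forest u v F /\
    (exists O1 : E -> bool, forall i j, i \in F ->
        (cut_coef u v F O1 i j == 0%R) || (cut_coef u v F O1 i j == 1%R)) /\
    (exists O2 : E -> bool, forall i, i \notin F ->
        forall (p : seq E) (vs : seq V),
        forest_path u v F (headO u v O2 i) (tailO u v O2 i) p vs ->
        forall j, (cyc_coef u v O2 i p vs j == 0%R) ||
                  (cyc_coef u v O2 i p vs j == 1%R)).
Proof.
exists F; split; first exact: F_max.
split; first by exists O1 => i j; apply: cut_ok.
exists O2 => i iF p vs Hp j; exact: cyc_ok.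
Qed.

End Main.

Section Exist.
Variables (V E : finType) (u v : E -> V).

Definition valid (par : V -> option E) (pv : V -> V) (h : V -> nat) :=
  (forall z e, par z = Some e -> joins u v e z (pv z) /\ h (pv z) + 1 = h z) /\
  (forall z, par z = None -> h z = 0).

Lemma valid_bound par pv h : valid par pv h -> forall z, h z < #|V|.
Proof.
move=> [H1 H2] z.
have Hit : forall k, k <= h z -> h (iter k pv z) = h z - k.
  elim=> [|k IH] Hk; first by rewrite subn0.
  have := IH (ltnW Hk); rewrite iterS; set w := iter k pv z => Hw.
  case Ew: (par w) => [e|]; last by move: (H2 _ Ew); lia.
  have [_ He] := H1 _ _ Ew; lia.
pose f (k : 'I_(h z).+1) := iter k pv z.
have finj : injective f.
  move=> k1 k2 Ef; apply: val_inj.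
  have := Hit _ (ltnSE (ltn_ord k1)); have := Hit _ (ltnSE (ltn_ord k2)).
  rewrite /f in Ef; rewrite Ef => ->.
  have := ltn_ord k1; have := ltn_ord k2; change (\val k1) with (nat_of_ord k1); change (\val k2) with (nat_of_ord k2); lia.
by have := leq_card f finj; rewrite card_ord.
Qed.

Lemma rehang par pv h e x y : valid par pv h -> joins u v e y x -> h y <= h x ->
  ~~ anc par pv y x -> exists par' pv' h', valid par' pv' h' /\
  \sum_(z : V) h z < \sum_(z : V) h' z.
Proof.
move=> [H1 H2] J Hyx Nyx.
have Ayy : anc par pv y y := connect0 _ _.
pose k := h x + 1 - h y.
pose par' z := if z == y then Some e else par z.
pose pv' z := if z == y then x else pv z.
pose h' z := if anc par pv y z then h z + k else h z.
exists par', pv', h'; split; first split.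
- move=> z e0; rewrite /par' /pv' /h'; case: eqP => [->|zy].
    case=> <-; split => //; rewrite (negbTE Nyx) Ayy; lia.
  move=> Ez; have [Jz Hz] := H1 _ _ Ez; split => //.
  case Ay: (anc par pv y z).
    have -> : anc par pv y (pv z) by apply: anc_inv Ay _; apply/eqP.
    lia.
  case Ay': (anc par pv y (pv z)) => //.
  by rewrite (anc_trans Ay' (anc_par _ Ez)) in Ay.
- move=> z; rewrite /par' /h'; case: eqP => // zy Ez.
  case Ay: (anc par pv y z); last exact: H2.
  by have := anc_root Ez Ay.
- rewrite (bigD1 y) //= [X in _ < X](bigD1 y) //=.
  have Hle : \sum_(i | i != y) h i <= \sum_(i | i != y) h' i.
    by apply: leq_sum => z _; rewrite /h'; case: ifP => _; lia.
  have -> : h' y = h y + k by rewrite /h' Ayy.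
  have : 0 < k by rewrite /k; lia.
  lia.
Qed.

Lemma ex_good : exists par pv h, valid par pv h /\
  forall e, anc par pv (u e) (v e) || anc par pv (v e) (u e).
Proof.
pose N := \sum_(z : V) #|V|.
have Hb : forall par pv h, valid par pv h -> \sum_(z : V) h z <= N.
  by move=> par pv h Hv; apply: leq_sum => z _; apply: ltnW; apply: valid_bound Hv z.
suff : forall n par pv h, valid par pv h -> N - \sum_(z : V) h z <= n ->
  exists par pv h, valid par pv h /\
  forall e, anc par pv (u e) (v e) || anc par pv (v e) (u e).
  move=> Hs; apply: (Hs N (fun _ => None) id (fun _ => 0)); first by split.
  by rewrite leq_subr.
elim=> [|n IH] par pv h Hv Hn;
  (case: (boolP [forall e, anc par pv (u e) (v e) || anc par pv (v e) (u e)])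
    => [/forallP H | /forallPn [e He]]; first by exists par, pv, h).
- rewrite negb_or in He; case/andP: He => N1 N2.
  have [par' [pv' [h' [Hv' Hs]]]] : exists par' pv' h', valid par' pv' h' /\
      \sum_(z : V) h z < \sum_(z : V) h' z.
    case: (leqP (h (u e)) (h (v e))) => Hl.
      exact: rehang Hv (joins_uv u v e) Hl N1.
    apply: (rehang (e:=e) Hv _ (ltnW Hl) N2); by rewrite joins_sym joins_uv.
  have := Hb _ _ _ Hv'; lia.
- rewrite negb_or in He; case/andP: He => N1 N2.
  have [par' [pv' [h' [Hv' Hs]]]] : exists par' pv' h', valid par' pv' h' /\
      \sum_(z : V) h z < \sum_(z : V) h' z.
    case: (leqP (h (u e)) (h (v e))) => Hl.
      exact: rehang Hv (joins_uv u v e) Hl N1.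
    apply: (rehang (e:=e) Hv _ (ltnW Hl) N2); by rewrite joins_sym joins_uv.
  apply: (IH par' pv' h' Hv'); have := Hb _ _ _ Hv'; lia.
Qed.

End Exist.

Theorem lemma3p2 (V E : finType) (u v : E -> V)
  (loopless : forall e, u e != v e) :
  exists F : {set E}, max_spanning_forest u v F /\
    (exists O1 : E -> bool, forall i j, i \in F ->
        (cut_coef u v F O1 i j == 0%R) || (cut_coef u v F O1 i j == 1%R)) /\
    (exists O2 : E -> bool, forall i, i \notin F ->
        forall (p : seq E) (vs : seq V),
        forest_path u v F (headO u v O2 i) (tailO u v O2 i) p vs ->
        forall j, (cyc_coef u v O2 i p vs j == 0%R) ||
                  (cyc_coef u v O2 i p vs j == 1%R)).
Proof.
have [par [pv [h [[H1 H2] Hc]]]] := ex_good u v.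
apply: (main_sec loopless (par := par) (pv := pv) (h := h)) => //.
- by move=> z e Ez; case: (H1 _ _ Ez).
- by move=> z e Ez; case: (H1 _ _ Ez) => _; lia.
Qed.
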